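(* Assume $X$ satisfies the $G$-latent model with covariance $\Sigma=ACA^t+\Gamma$. If $\Delta(C)>\frac{2}{m}|\Gamma|_V$, then $B^*$ is the unique maximizer of $B\mapsto\langle\Sigma,B\rangle$ over $\mathcal{D}$.
   Context: Let $G=\{G_1,\dots,G_K\}$ be a partition of $[p]$ into nonempty groups, $k(a)$ the index with $a\in G_{k(a)}$, $m=\min_k|G_k|$. A centered random vector $X$ satisfies the $G$-latent model if $X_a=Z_{k(a)}+E_a$ for all $a$, where $Z\in\mathbb{R}^K$ is centered, $E\in\mathbb{R}^p$ is centered, independent of $Z$, with independent coordinates and $\mathrm{Var}(E_a)=\gamma_{k(a)}$. Then $\Sigma=\mathrm{Cov}(X)=ACA^t+\Gamma$ with $A_{ak}=1_{\{a\in G_k\}}$, $C=\mathrm{Cov}(Z)$, $\Gamma=\mathrm{diag}(\gamma_{k(a)})_a$. $\Delta(C)=\min_{j<k}(C_{jj}+C_{kk}-2C_{jk})$. For diagonal $D$, $|D|_V=\max_aD_{aa}-\min_aD_{aa}$. $B^*$ is the $p\times p$ matrix with $B^*_{ab}=1/|G_k|$ if $a,b\in G_k$ for some $k$, and $0$ otherwise. $\langle M,N\rangle=\mathrm{tr}(M^tN)$. $\mathcal{C}$ is the set of symmetric positive semidefinite $p\times p$ matrices $B$ with $\sum_aB_{ab}=1$ for all $b$, $B_{ab}\ge0$ for all $a,b$, and $\mathrm{tr}(B)=K$; $\mathcal{D}=\{B\in\mathcal{C}: B^2=B\}$. *)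

(* Defs.v *)
(* the statement is purely algebraic (about covariance
   matrices), stated over an arbitrary real field R. *)
From HB Require Import structures.
From mathcomp Require Import all_boot all_order all_algebra.
Set Implicit Arguments. Unset Strict Implicit. Unset Printing Implicit Defensive.
Import Order.TTheory GRing.Theory Num.Theory.
Local Open Scope ring_scope.

(* A partition of [p] into K groups is encoded by the group-index map
   kk : 'I_p -> 'I_K  (kk a = k(a)); group G_k = [set a | kk a == k]. *)
Definition group_of (p K : nat) (kk : 'I_p -> 'I_K) (k : 'I_K) : {set 'I_p} :=
  [set a | kk a == k].

(* m = min_k |G_k|  (default value p, only relevant when K = 0, i.e. p = 0) *)
Definition min_group_size (p K : nat) (kk : 'I_p -> 'I_K) : nat :=
  \big[minn/p]_(k : 'I_K) #|group_of kk k|.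

Definition memb_mx (R : nzRingType) (p K : nat) (kk : 'I_p -> 'I_K) : 'M[R]_(p, K) :=
  \matrix_(a, k) (kk a == k)%:R.

Definition noise_mx (R : nzRingType) (p K : nat) (kk : 'I_p -> 'I_K)
  (gamma : 'I_K -> R) : 'M[R]_p :=
  diag_mx (\row_a gamma (kk a)).

Definition latent_cov (R : nzRingType) (p K : nat) (kk : 'I_p -> 'I_K)
  (C : 'M[R]_K) (gamma : 'I_K -> R) : 'M[R]_p :=
  memb_mx R kk *m C *m (memb_mx R kk)^T + noise_mx kk gamma.

(* |D|_V = max_a D_aa - min_a D_aa  (0 when p = 0) *)
Definition var_seminorm (R : realFieldType) (p : nat) (D : 'M[R]_p) : R :=
  let s := [seq D a a | a <- enum 'I_p] in
  foldr Num.max (head 0 s) s - foldr Num.min (head 0 s) s.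

Definition Bstar (R : fieldType) (p K : nat) (kk : 'I_p -> 'I_K) : 'M[R]_p :=
  \matrix_(a, b) if kk a == kk b then (#|group_of kk (kk a)|%:R)^-1 else 0.

Definition frob (R : nzRingType) (p : nat) (M N : 'M[R]_p) : R := \tr (M^T *m N).

Definition psd (R : realFieldType) (n : nat) (M : 'M[R]_n) : Prop :=
  M^T = M /\ forall v : 'cV[R]_n, 0 <= (v^T *m M *m v) 0 0.

Definition in_Cset (R : realFieldType) (p K : nat) (B : 'M[R]_p) : Prop :=
  psd B /\ (forall b, \sum_a B a b = 1) /\ (forall a b, 0 <= B a b) /\ \tr B = K%:R.

Definition in_Dset (R : realFieldType) (p K : nat) (B : 'M[R]_p) : Prop :=
  in_Cset K B /\ B *m B = B.

(* Main.v *)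
Require Import Defs.
From HB Require Import structures.
From mathcomp Require Import all_boot all_order all_algebra.
From mathcomp Require Import ring lra.
Import Order.TTheory GRing.Theory Num.Theory.
Local Open Scope ring_scope.
Lemma frobE (R : realFieldType) p (M N : 'M[R]_p) :
  frob M N = \sum_a \sum_b M a b * N a b.
Proof.
rewrite /frob /mxtrace exchange_big; apply: eq_bigr => a _.
rewrite mxE; apply: eq_bigr => b _; by rewrite mxE.
Qed.

Lemma sum_delta (R : realFieldType) (K : nat) (x : 'I_K) (f : 'I_K -> R) :
  \sum_i (x == i)%:R * f i = f x.
Proof.
rewrite (bigD1 x) //= eqxx mul1r big1 ?addr0 // => i /negbTE.
by rewrite eq_sym => ->; rewrite mul0r.
Qed.

Lemma covE (R : realFieldType) p K (kk : 'I_p -> 'I_K) (C : 'M[R]_K) (gamma : 'I_K -> R) a b :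
  latent_cov kk C gamma a b = C (kk a) (kk b) + (a == b)%:R * gamma (kk a).
Proof.
rewrite /latent_cov /noise_mx !mxE; congr (_ + _).
  rewrite (eq_bigr (fun j => C (kk a) j * (kk b == j)%:R)); last first.
    move=> j _; rewrite !mxE; congr (_ * _).
    rewrite (eq_bigr (fun i => (kk a == i)%:R * C i j)) ?sum_delta //.
    by move=> i _; rewrite mxE.
  by rewrite (eq_bigr (fun j => (kk b == j)%:R * C (kk a) j)) ?sum_delta // => j _; rewrite mulrC.
by rewrite mulr_natl.
Qed.
Lemma psd_of_idem (R : realFieldType) n (B : 'M[R]_n) :
  B^T = B -> B *m B = B -> psd B.
Proof.
move=> Hs Hi; split => // v.
have -> : v^T *m B *m v = (B *m v)^T *m (B *m v).
  by rewrite trmx_mul Hs -mulmxA -[in LHS]Hi -Hs !mulmxA.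
rewrite mxE; apply: sumr_ge0 => i _; rewrite mxE.
by rewrite -expr2 sqr_ge0. Qed.

Lemma sum_grp_const (R : realFieldType) p K (kk : 'I_p -> 'I_K) k (c : R) :
  \sum_(b | kk b == k) c = c *+ #|group_of kk k|.
Proof. by rewrite -sumr_const; apply: eq_bigl => b; rewrite inE. Qed.

Lemma grp_pos p K (kk : 'I_p -> 'I_K) a : (0 < #|group_of kk (kk a)|)%N.
Proof. by apply/card_gt0P; exists a; rewrite inE. Qed.

Lemma grp_pos' p K (kk : 'I_p -> 'I_K) k :
  (exists a, kk a = k) -> (0 < #|group_of kk k|)%N.
Proof. by move=> [a <-]; apply: grp_pos. Qed.

Lemma inv_card (R : realFieldType) n : (0 < n)%N -> (n%:R : R)^-1 *+ n = 1.
Proof. by move=> h; rewrite -(mulr_natr (n%:R)^-1) mulVf // pnatr_eq0 -lt0n. Qed.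

Lemma BstarE (R : realFieldType) p K (kk : 'I_p -> 'I_K) a b :
  Bstar R kk a b = if kk a == kk b then (#|group_of kk (kk a)|%:R)^-1 else 0.
Proof. by rewrite mxE. Qed.

Lemma Bstar_row (R : realFieldType) p K (kk : 'I_p -> 'I_K) a :
  \sum_b Bstar R kk a b = 1.
Proof.
rewrite (eq_bigr (fun b => if kk a == kk b then (#|group_of kk (kk a)|%:R)^-1 else 0)); last by move=> b _; rewrite BstarE.
rewrite -big_mkcond /=.
rewrite (eq_bigl (fun b => kk b == kk a)); last by move=> b; rewrite eq_sym.
by rewrite sum_grp_const inv_card // grp_pos.
Qed.

Lemma Bstar_sym (R : realFieldType) p K (kk : 'I_p -> 'I_K) :
  (Bstar R kk)^T = Bstar R kk.
Proof.
apply/matrixP => a b; rewrite mxE !BstarE eq_sym.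
by case: eqP => // ->.
Qed.

Lemma Bstar_col (R : realFieldType) p K (kk : 'I_p -> 'I_K) b :
  \sum_a Bstar R kk a b = 1.
Proof.
rewrite -(@Bstar_row R _ _ kk b); apply: eq_bigr => a _.
by rewrite -{1}(@Bstar_sym R _ _ kk) mxE.
Qed.

Lemma Bstar_idem (R : realFieldType) p K (kk : 'I_p -> 'I_K) :
  Bstar R kk *m Bstar R kk = Bstar R kk.
Proof.
apply/matrixP => a b; rewrite !mxE.
rewrite (eq_bigr (fun c => if kk c == kk a then
     (if kk a == kk b then (#|group_of kk (kk a)|%:R)^-1 ^+ 2 else 0) else 0)); last first.
  move=> c _; rewrite !BstarE; case: (eqVneq (kk c) (kk a)) => [->|h].
    by case: ifP; rewrite ?mulr0 // expr2.
  by rewrite mul0r.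
rewrite -big_mkcond /= sum_grp_const; case: ifP; last by rewrite mul0rn.
by rewrite expr2 -mulrnAr inv_card ?mulr1 // grp_pos.
Qed.

Lemma Bstar_tr (R : realFieldType) p K (kk : 'I_p -> 'I_K) :
  (forall k, exists a, kk a = k) -> \tr (Bstar R kk) = K%:R.
Proof.
move=> Hg; rewrite /mxtrace (partition_big kk predT) //=.
rewrite (eq_bigr (fun _ => 1)); first by rewrite sumr_const card_ord.
move=> k _; rewrite (eq_bigr (fun _ => (#|group_of kk k|%:R)^-1)).
  by rewrite sum_grp_const inv_card // grp_pos'.
by move=> a /eqP <-; rewrite BstarE eqxx.
Qed.

Lemma Bstar_ge0 (R : realFieldType) p K (kk : 'I_p -> 'I_K) a b :
  0 <= Bstar R kk a b.
Proof. by rewrite BstarE; case: ifP => // _; rewrite invr_ge0 ler0n. Qed.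

Lemma Bstar_D (R : realFieldType) p K (kk : 'I_p -> 'I_K) :
  (forall k, exists a, kk a = k) -> in_Dset K (Bstar R kk).
Proof.
move=> Hg; split; last exact: Bstar_idem.
split; first by apply: psd_of_idem; [exact: Bstar_sym|exact: Bstar_idem].
split; first exact: Bstar_col.
split; first exact: Bstar_ge0.
exact: Bstar_tr.
Qed.
Lemma sq_sum (R : realFieldType) (I : finType) (P : pred I) (x : I -> R) (t : R) :
  \sum_(a | P a) (x a - t) ^+ 2 =
  \sum_(a | P a) x a ^+ 2 - 2 * t * (\sum_(a | P a) x a) + t ^+ 2 *+ #|[pred a | P a]|.
Proof.
rewrite -sumr_const.
rewrite (eq_bigr (fun a => x a ^+ 2 - 2 * t * x a + t ^+ 2)); last first.
  by move=> a _; rewrite sqrrB; congr (_ - _ + _); rewrite mulr2n mulrDl mul1r mulrC mulrDl.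
by rewrite big_split /= sumrB mulr_sumr; congr (_ - _ + _).
Qed.

Lemma group_id (R : realFieldType) p K (kk : 'I_p -> 'I_K) (B : 'M[R]_p) k :
  B^T = B -> B *m B = B -> (forall b, \sum_a B a b = 1) ->
  (0 < #|group_of kk k|)%N ->
  let n := (#|group_of kk k|%:R : R) in
  let s c := \sum_(a | kk a == k) B c a in
  \sum_c \sum_(a | kk a == k) (B c a - s c / n) ^+ 2 =
  \sum_(a | kk a == k) B a a - 1 +
     (\sum_(a | kk a == k) \sum_(b | kk b != k) B a b) / n.
Proof.
move=> Hs Hi Hcol Hn n s.
have Bsym : forall a b, B a b = B b a by move=> a b; rewrite -{1}Hs mxE.
have Hrow : forall a, \sum_b B a b = 1.
  by move=> a; rewrite -(Hcol a); apply: eq_bigr => b _; rewrite Bsym.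
have Hoff : forall a a', B a a' = \sum_c B c a * B c a'.
  move=> a a'; rewrite -{1}Hi mxE; apply: eq_bigr => c _; by rewrite Bsym.
have n0 : n != 0 by rewrite pnatr_eq0 -lt0n.
have cardP : #|[pred a | kk a == k]| = #|group_of kk k|.
  by apply: eq_card => a; rewrite !inE.
rewrite (eq_bigr (fun c => \sum_(a | kk a == k) B c a ^+ 2 - s c ^+ 2 / n)); last first.
  move=> c _; rewrite sq_sum cardP -/(s c) -[_ *+ #|_|]mulr_natr -/n.
  by field.
rewrite sumrB.
have -> : \sum_c \sum_(a | kk a == k) B c a ^+ 2 = \sum_(a | kk a == k) B a a.
  rewrite exchange_big; apply: eq_bigr => a _; rewrite Hoff.
  by apply: eq_bigr => c _; rewrite expr2.
rewrite -mulr_suml.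
have -> : \sum_c s c ^+ 2 = \sum_(a | kk a == k) \sum_(a' | kk a' == k) B a a'.
  rewrite (eq_bigr (fun c => \sum_(a | kk a == k) \sum_(a' | kk a' == k) B c a * B c a')); last first.
    by move=> c _; rewrite expr2 mulr_suml; apply: eq_bigr => a _; rewrite mulr_sumr.
  rewrite exchange_big; apply: eq_bigr => a _; rewrite exchange_big; apply: eq_bigr => a' _.
  by rewrite Hoff.
have -> : \sum_(a | kk a == k) \sum_(a' | kk a' == k) B a a' =
   n - \sum_(a | kk a == k) \sum_(b | kk b != k) B a b.
  rewrite /n -sum_grp_const -sumrB; apply: eq_bigr => a _.
  by have := Hrow a; rewrite (bigID (fun b => kk b == k)) /= => <-; rewrite addrK.
by field.
Qed.
Lemma offzero (R : realFieldType) p K (kk : 'I_p -> 'I_K) (B : 'M[R]_p) :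
  (forall k, exists a, kk a = k) ->
  B^T = B -> B *m B = B -> (forall b, \sum_a B a b = 1) -> \tr B = K%:R ->
  (forall a b, kk a != kk b -> B a b = 0) -> B = Bstar R kk.
Proof.
move=> Hg Hs Hi Hcol Htr Hoff.
have Bsym : forall a b, B a b = B b a by move=> a b; rewrite -{1}Hs mxE.
have Hrow : forall a, \sum_b B a b = 1.
  by move=> a; rewrite -(Hcol a); apply: eq_bigr => b _; rewrite Bsym.
have Hsrow : forall c, \sum_(a | kk a == kk c) B c a = 1.
  move=> c; rewrite -(Hrow c) [RHS](bigID (fun a => kk a == kk c)) /=.
  rewrite [X in _ = _ + X]big1 ?addr0 // => a ha; apply: Hoff.
  by rewrite eq_sym.
have Ho : forall k, \sum_(a | kk a == k) \sum_(b | kk b != k) B a b = 0.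
  move=> k; apply: big1 => a /eqP ha; apply: big1 => b hb; apply: Hoff.
  by rewrite ha eq_sym.
have HQ := fun k => @group_id R _ _ kk B k Hs Hi Hcol (@grp_pos' _ _ kk k (Hg k)).
have Hsum : \sum_k (\sum_(a | kk a == k) B a a - 1) = 0.
  rewrite sumrB sumr_const card_ord -Htr /mxtrace (partition_big kk predT) //=.
  by rewrite subrr.
have Hz : forall k, \sum_(a | kk a == k) B a a - 1 = 0.
  move=> k; apply: (psumr_eq0P _ Hsum) => // i _.
  have := HQ i; rewrite /= Ho mul0r addr0 => <-.
  by apply: sumr_ge0 => c _; apply: sumr_ge0 => a _; apply: sqr_ge0.
apply/matrixP => c a; rewrite BstarE.
case: (eqVneq (kk c) (kk a)) => [e|ne]; last exact: Hoff.
set k := kk a.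
have HQ0 := HQ k; rewrite /= Ho mul0r addr0 Hz in HQ0.
have h1 := psumr_eq0P (fun c _ => sumr_ge0 _ (fun a _ => sqr_ge0 _)) HQ0 (erefl true : predT c).
have h2 := psumr_eq0P (fun a _ => sqr_ge0 _) (h1 c) (eqxx k : kk a == k).
move: h2 => /eqP; rewrite sqrf_eq0 subr_eq0 => /eqP ->.
by rewrite /k -e Hsrow mul1r.
Qed.
Lemma frob_split (R : realFieldType) p K (kk : 'I_p -> 'I_K) (C : 'M[R]_K)
  (gamma : 'I_K -> R) (M : 'M[R]_p) :
  frob (latent_cov kk C gamma) M =
  \sum_a \sum_b C (kk a) (kk b) * M a b + \sum_a gamma (kk a) * M a a.
Proof.
rewrite frobE -big_split /=; apply: eq_bigr => a _.
rewrite (eq_bigr (fun b => C (kk a) (kk b) * M a b + (a == b)%:R * (gamma (kk a) * M a b))); last first.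
  by move=> b _; rewrite covE mulrDl mulrA.
rewrite big_split /=; congr (_ + _).
rewrite (bigD1 a) //= eqxx mul1r big1 ?addr0 // => b /negbTE.
by rewrite eq_sym => ->; rewrite mul0r.
Qed.

Lemma Cpart_star (R : realFieldType) p K (kk : 'I_p -> 'I_K) (C : 'M[R]_K) :
  \sum_a \sum_b C (kk a) (kk b) * Bstar R kk a b = \sum_a C (kk a) (kk a).
Proof.
apply: eq_bigr => a _.
rewrite -[RHS]mulr1 -(@Bstar_row R _ _ kk a) mulr_sumr; apply: eq_bigr => b _.
by rewrite BstarE; case: eqP => [->|_]; rewrite ?mulr0.
Qed.
Lemma noise_bound (R : realFieldType) p K (kk : 'I_p -> 'I_K)
  (gamma : 'I_K -> R) (B : 'M[R]_p) (g V : R) (m : nat) :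
  (forall k, exists a, kk a = k) ->
  B^T = B -> B *m B = B -> (forall b, \sum_a B a b = 1) -> \tr B = K%:R ->
  (forall a b, 0 <= B a b) ->
  (forall k, 0 <= g - gamma k) -> (forall k, g - gamma k <= V) ->
  (forall k, (m <= #|group_of kk k|)%N) -> (0 < m)%N ->
  - \sum_a \sum_(b | kk b != kk a) V / m%:R * B a b <=
  \sum_a gamma (kk a) * Bstar R kk a a - \sum_a gamma (kk a) * B a a.
Proof.
move=> Hg Hs Hi Hcol Htr Hnn He1 He2 Hm Hm0.
set inv := fun a => (#|group_of kk (kk a)|%:R : R)^-1.
have Hst : forall a, Bstar R kk a a = inv a by move=> a; rewrite BstarE eqxx.
have Htr0 : \sum_a (B a a - inv a) = 0.
  rewrite sumrB -[X in X - _]/(\tr B) Htr -(@Bstar_tr R _ _ kk Hg) /mxtrace.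
  by rewrite (eq_bigr _ (fun a _ => Hst a)) subrr.
have -> : \sum_a gamma (kk a) * Bstar R kk a a - \sum_a gamma (kk a) * B a a =
          \sum_a (g - gamma (kk a)) * (B a a - inv a).
  rewrite -sumrB [RHS](eq_bigr (fun a => g * (B a a - inv a) + (gamma (kk a) * Bstar R kk a a - gamma (kk a) * B a a))); last first.
    by move=> a _; rewrite Hst; ring.
  by rewrite [RHS]big_split /= -mulr_sumr Htr0 mulr0 add0r sumrB.
rewrite [X in _ <= X](partition_big kk predT) //=.
rewrite (eq_bigr (fun k => (g - gamma k) * (\sum_(a | kk a == k) B a a - 1))); last first.
  move=> k _.
  rewrite -(@inv_card R _ (@grp_pos' _ _ kk k (Hg k))) -sum_grp_const -sumrB mulr_sumr.
  by apply: eq_bigr => a /eqP ha; rewrite /inv ha.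
set o := fun k => \sum_(a | kk a == k) \sum_(b | kk b != k) B a b.
have Hk : forall k, - ((g - gamma k) * (o k / #|group_of kk k|%:R)) <=
                    (g - gamma k) * (\sum_(a | kk a == k) B a a - 1).
  move=> k; rewrite -mulrN; apply: ler_wpM2l => //.
  have := @group_id R _ _ kk B k Hs Hi Hcol (@grp_pos' _ _ kk k (Hg k)).
  rewrite /= -/(o k) => HQ.
  have Q0 : 0 <= \sum_(a | kk a == k) B a a - 1 + o k / #|group_of kk k|%:R.
    by rewrite -HQ; apply: sumr_ge0 => c _; apply: sumr_ge0 => a _; apply: sqr_ge0.
  lra.
apply: le_trans (ler_sum _ (fun k _ => Hk k)).
rewrite sumrN lerN2.
rewrite [X in _ <= X](partition_big kk predT) //=.
apply: ler_sum => k _; rewrite /o mulr_suml mulr_sumr; apply: ler_sum => a /eqP ha.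
rewrite ha mulr_suml mulr_sumr; apply: ler_sum => b _.
rewrite mulrCA mulrC; apply: ler_wpM2r => //.
have n0 : (0 < #|group_of kk k|%:R :> R) by rewrite ltr0n; apply: grp_pos'.
have m0 : (0 < m%:R :> R) by rewrite ltr0n.
apply: ler_pM => //; first by rewrite invr_ge0 ltW.
by rewrite lef_pV2 ?posrE // ler_nat.
Qed.
Lemma cpart (R : realFieldType) p K (kk : 'I_p -> 'I_K) (C : 'M[R]_K) (B : 'M[R]_p) :
  C^T = C -> B^T = B -> (forall b, \sum_a B a b = 1) ->
  \sum_a C (kk a) (kk a) - \sum_a \sum_b C (kk a) (kk b) * B a b =
  \sum_a \sum_(b | kk b != kk a)
     ((C (kk a) (kk a) + C (kk b) (kk b) - 2 * C (kk a) (kk b)) / 2 * B a b).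
Proof.
move=> HCs Hs Hcol.
have Bsym : forall a b, B a b = B b a by move=> a b; rewrite -{1}Hs mxE.
have Csym : forall j k, C j k = C k j by move=> j k; rewrite -{1}HCs mxE.
have Hrow : forall a, \sum_b B a b = 1.
  by move=> a; rewrite -(Hcol a); apply: eq_bigr => b _; rewrite Bsym.
set X := \sum_a \sum_b (C (kk a) (kk a) - C (kk a) (kk b)) * B a b.
have X0 : \sum_a C (kk a) (kk a) - \sum_a \sum_b C (kk a) (kk b) * B a b = X.
  rewrite -sumrB; apply: eq_bigr => a _.
  by rewrite -[X in X - _]mulr1 -(Hrow a) mulr_sumr -sumrB; apply: eq_bigr => b _; rewrite mulrBl.
have X1 : X = \sum_a \sum_b (C (kk b) (kk b) - C (kk a) (kk b)) * B a b.
  rewrite /X exchange_big; apply: eq_bigr => a _; apply: eq_bigr => b _.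
  by rewrite Bsym Csym.
rewrite X0.
have -> : X = \sum_a \sum_b (C (kk a) (kk a) + C (kk b) (kk b) - 2 * C (kk a) (kk b)) / 2 * B a b.
  have -> : X = (X + X) / 2 by field.
  rewrite {2}X1 /X -big_split mulr_suml; apply: eq_bigr => a _.
  rewrite -big_split mulr_suml; apply: eq_bigr => b _ /=.
  by field.
apply: eq_bigr => a _.
rewrite (bigID (fun b => kk b != kk a)) /= [X in _ + X]big1 ?addr0 // => b.
by rewrite negbK => /eqP ->; ring.
Qed.
Lemma bigminn_le (I : eqType) (r : seq I) (x0 : nat) (F : I -> nat) x :
  x \in r -> (\big[minn/x0]_(i <- r) F i <= F x)%N.
Proof.
elim: r => //= y r IH; rewrite big_cons in_cons => /orP [/eqP ->|h].
  exact: geq_minl.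
by apply: leq_trans (geq_minr _ _) (IH h).
Qed.
Lemma foldr_max_ge (R : realFieldType) (s : seq R) x0 x : x \in s -> x <= foldr Num.max x0 s.
Proof.
elim: s => //= y s IH; rewrite in_cons => /orP [/eqP ->|/IH h].
  by rewrite le_max lexx.
by rewrite le_max h orbT.
Qed.
Lemma foldr_min_le (R : realFieldType) (s : seq R) x0 x : x \in s -> foldr Num.min x0 s <= x.
Proof.
elim: s => //= y s IH; rewrite in_cons => /orP [/eqP ->|/IH h].
  by rewrite ge_min lexx.
by rewrite ge_min h orbT.
Qed.
Theorem mainTheorem2 (R : realFieldType) (p K : nat) (kk : 'I_p -> 'I_K)
    (C : 'M[R]_K) (gamma : 'I_K -> R)
    (Hgroups : forall k : 'I_K, exists a : 'I_p, kk a = k)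
    (HC : psd C)
    (Hgamma : forall k, 0 <= gamma k)
    (HDelta : forall j k : 'I_K, j != k ->
       2 / (min_group_size kk)%:R * var_seminorm (noise_mx kk gamma)
         < C j j + C k k - 2 * C j k) :
  let Sigma := latent_cov kk C gamma in
  in_Dset K (Bstar R kk) /\
  (forall B, in_Dset K B -> frob Sigma B <= frob Sigma (Bstar R kk)) /\
  (forall B, in_Dset K B -> frob Sigma B = frob Sigma (Bstar R kk) -> B = Bstar R kk).
Proof.
move=> Sigma.
have HD := @Bstar_D R _ _ kk Hgroups.
case: (posnP p) => [p0|pp].
  have eqB : forall B : 'M[R]_p, B = Bstar R kk.
    by move=> B; apply/matrixP => a; have := ltn_ord a; rewrite [X in (_ < X)%N -> _]p0.
  by split => //; split => B _; rewrite -(eqB B).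
set m := min_group_size kk.
have Hm : forall k, (m <= #|group_of kk k|)%N.
  by move=> k; rewrite /m /min_group_size; apply: bigminn_le; rewrite mem_index_enum.
have Hm0 : (0 < m)%N.
  rewrite /m /min_group_size; apply: (big_ind (fun x => 0 < x)%N) => //.
    by move=> x y hx hy; rewrite leq_min hx hy.
  by move=> k _; apply: grp_pos'.
set s := [seq (noise_mx kk gamma) a a | a <- enum 'I_p].
set g := foldr Num.max (head 0 s) s.
set g0 := foldr Num.min (head 0 s) s.
have HV : var_seminorm (noise_mx kk gamma) = g - g0 by [].
have Hin : forall k, gamma k \in s.
  move=> k; have [a <-] := Hgroups k.
  have -> : gamma (kk a) = noise_mx kk gamma a a by rewrite /noise_mx mxE eqxx mulr1n mxE.
  by apply: map_f; rewrite mem_enum.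
have He1 : forall k, 0 <= g - gamma k.
  by move=> k; rewrite subr_ge0; apply: foldr_max_ge.
have He2 : forall k, g - gamma k <= var_seminorm (noise_mx kk gamma).
  by move=> k; rewrite HV; have := @foldr_min_le R s (head 0 s) _ (Hin k); rewrite -/g0; lra.
set V := var_seminorm (noise_mx kk gamma) in HDelta He2.
have key : forall B, in_Dset K B ->
  \sum_a \sum_(b | kk b != kk a)
     (((C (kk a) (kk a) + C (kk b) (kk b) - 2 * C (kk a) (kk b)) / 2 - V / m%:R) * B a b)
  <= frob Sigma (Bstar R kk) - frob Sigma B.
  move=> B [[[Hs _] [Hcol [Hnn Htr]]] Hi].
  rewrite /Sigma !frob_split Cpart_star.
  have := @cpart R _ _ kk C B HC.1 Hs Hcol.
  have := @noise_bound R _ _ kk gamma B g V m Hgroups Hs Hi Hcol Htr Hnn He1 He2 Hm Hm0.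
  have -> : \sum_a \sum_(b | kk b != kk a)
     (((C (kk a) (kk a) + C (kk b) (kk b) - 2 * C (kk a) (kk b)) / 2 - V / m%:R) * B a b) =
     \sum_a \sum_(b | kk b != kk a)
     ((C (kk a) (kk a) + C (kk b) (kk b) - 2 * C (kk a) (kk b)) / 2 * B a b) -
     \sum_a \sum_(b | kk b != kk a) V / m%:R * B a b.
    rewrite -sumrB; apply: eq_bigr => a _; rewrite -sumrB; apply: eq_bigr => b _.
    by rewrite mulrBl.
  lra.
have termpos : forall B, in_Dset K B -> forall a b, kk b != kk a ->
   0 <= ((C (kk a) (kk a) + C (kk b) (kk b) - 2 * C (kk a) (kk b)) / 2 - V / m%:R) * B a b /\
   (((C (kk a) (kk a) + C (kk b) (kk b) - 2 * C (kk a) (kk b)) / 2 - V / m%:R) * B a b = 0 -> B a b = 0).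
  move=> B [[_ [_ [Hnn _]]] _] a b hab.
  have hne : kk a != kk b by rewrite eq_sym.
  have h := HDelta _ _ hne; rewrite -/m in h.
  have hp : 0 < (C (kk a) (kk a) + C (kk b) (kk b) - 2 * C (kk a) (kk b)) / 2 - V / m%:R.
    have e : 2 / m%:R * V = 2 * (V / m%:R) by rewrite mulrAC -mulrA.
    rewrite e in h; lra.
  split; first by apply: mulr_ge0 => //; apply: ltW.
  by move/eqP; rewrite mulf_eq0 (gt_eqF hp) /= => /eqP.
have Spos : forall B, in_Dset K B -> 0 <= \sum_a \sum_(b | kk b != kk a)
     (((C (kk a) (kk a) + C (kk b) (kk b) - 2 * C (kk a) (kk b)) / 2 - V / m%:R) * B a b).
  move=> B HB; apply: sumr_ge0 => a _; apply: sumr_ge0 => b hb.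
  by case: (termpos B HB a b hb).
split => //; split.
  move=> B HB; have := key B HB; have := Spos B HB; lra.
move=> B HB Heq.
have S0 : \sum_a \sum_(b | kk b != kk a)
     (((C (kk a) (kk a) + C (kk b) (kk b) - 2 * C (kk a) (kk b)) / 2 - V / m%:R) * B a b) = 0.
  apply/eqP; rewrite eq_le Spos // andbT.
  by have := key B HB; rewrite Heq subrr.
have Hoff : forall a b, kk a != kk b -> B b a = 0.
  move=> a b hab.
  have h1 := psumr_eq0P (fun a _ => sumr_ge0 _ (fun b hb => (termpos B HB a b hb).1)) S0 (erefl true : predT b).
  have h2 := psumr_eq0P (fun a hb => (termpos B HB b a hb).1) (h1 b) hab.
  exact: (termpos B HB b a hab).2 h2.
move: HB => [[[Hs _] [Hcol [_ Htr]]] Hi].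
apply: (@offzero R _ _ kk B Hgroups Hs Hi Hcol Htr) => a b hab.
by apply: Hoff; rewrite eq_sym.
Qed.
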